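(* Let $\alpha \in [0,1)$, let $T$ be any monotone total order on $\Omega$, let $\mathbf{x} \in \Omega$, and let $k \in \{0,\dots,m-2\}$ be such that $\mathbf{S}_k \le_T \mathbf{x} \le_T \mathbf{S}_{k+1}$, where $\mathbf{S}_j = (S_j,\dots,S_j)$ denotes a homogeneous sample. Then $$B_{T_h}^*(\mathbf{S}_k) \le B_T^*(\mathbf{x}) \le B_{T_\ell}^*(\mathbf{S}_{k+1}).$$
   Context: Fix integers $m \ge 2$, $n \ge 1$ and reals $S_{\min} < S_{\max}$; $S = \{S_0,\dots,S_{m-1}\}$ with $S_k = S_{\min} + k\frac{S_{\max}-S_{\min}}{m-1}$. $\mathcal{F}$ is the set of probability distributions on $S$, identified with the probability simplex in $\mathbb{R}^m$ with the Euclidean topology; $E[F]$ is the mean. $\Omega$ is the set of samples of size $n$ from $S$, identified with their sorted versions $x_{(1)} \le \dots \le x_{(n)}$. $P_F[\Omega']$ is the probability that the sorted sample of $n$ i.i.d. draws from $F$ lies in $\Omega' \subseteq \Omega$; $\mathcal{G}(\Omega',\alpha) = \{F : P_F[\Omega'] > \alpha\}$ and $\mathcal{F}(\Omega',\alpha)$ is its closure. For a total order $T$ on $\Omega$, $\Omega(\mathbf{x},T) = \{\mathbf{y} : \mathbf{x} \le_T \mathbf{y}\}$ and the pessimal (conditionally optimal) bound is $B_T^*(\mathbf{x}) = \min\{E[F] : F \in \mathcal{F}(\Omega(\mathbf{x},T),\alpha)\}$ (standing assumption: the sets involved are nonempty). $\mathbf{x} \le \mathbf{y}$ means $x_{(j)}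 \le y_{(j)}$ for all $j$; $T$ is monotone if $\mathbf{x} \le \mathbf{y}$ implies $\mathbf{x} \le_T \mathbf{y}$. $T_\ell$ (low lexicographic): $\mathbf{x} \le_{T_\ell} \mathbf{y}$ iff $\mathbf{x}=\mathbf{y}$ or at the smallest index $j$ with $x_{(j)} \ne y_{(j)}$ we have $x_{(j)} < y_{(j)}$. $T_h$ (high lexicographic): same with the largest such index. *)

(* Defs.v *)
From HB Require Import structures.
From mathcomp Require Import all_boot all_order all_algebra.
From mathcomp Require Import classical_sets boolp reals topology normedtype.
Import numFieldNormedType.Exports.
Set Implicit Arguments. Unset Strict Implicit. Unset Printing Implicit Defensive.
Import Order.TTheory GRing.Theory Num.Theory.
Local Open Scope classical_set_scope.
Local Open Scope ring_scope.

(* Support points are indexed by 'I_m : index k stands for S_k. *)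
Definition Spt {R : realType} (m : nat) (Smin Smax : R) (k : 'I_m) : R :=
  Smin + (k%:R) * ((Smax - Smin) / (m.-1)%:R).

(* Sorted samples of size n from S (as sorted index tuples). *)
Definition ord_le (m : nat) : rel 'I_m := fun a b => (a <= b)%N.
Definition Omega (m n : nat) := {x : n.-tuple 'I_m | sorted (@ord_le m) x}.

(* Probability distributions on S: the probability simplex in R^m
   (row vectors, with the product = Euclidean topology). *)
Definition simplex {R : realType} (m : nat) : set 'rV[R]_m :=
  [set F | (forall i, 0 <= F ord0 i) /\ \sum_(i < m) F ord0 i = 1].

Definition mean {R : realType} (m : nat) (Smin Smax : R) (F : 'rV[R]_m) : R :=
  \sum_(i < m) F ord0 i * Spt Smin Smax i.

(* P_F[Om']: probability that the sorted sample of n iid draws from F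
   lies in Om'. *)
Definition probF {R : realType} (m n : nat) (F : 'rV[R]_m) (Om' : pred (Omega m n)) : R :=
  \sum_(w : n.-tuple 'I_m |
          [exists y : Omega m n, (y \in Om') && (tval (val y) == sort (@ord_le m) w)])
     \prod_(i < n) F ord0 (tnth w i).

Definition Gset {R : realType} (m n : nat) (Om' : pred (Omega m n)) (alpha : R)
  : set 'rV[R]_m := [set F | @simplex R m F /\ probF F Om' > alpha].

Definition Fset {R : realType} (m n : nat) (Om' : pred (Omega m n)) (alpha : R)
  : set 'rV[R]_m := @closure 'rV[R]_m (Gset Om' alpha).

Definition Omega_up (m n : nat) (T : rel (Omega m n)) (x : Omega m n) : pred (Omega m n) :=
  [pred y | T x y].

(* Pessimal bound B_T^*(x) = min { E[F] : F in F(Omega(x,T),alpha) }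
   (the min exists; we write it as the infimum). *)
Definition Bstar {R : realType} (m n : nat) (Smin Smax alpha : R)
  (T : rel (Omega m n)) (x : Omega m n) : R :=
  inf [set mean Smin Smax F | F in Fset (Omega_up T x) alpha].

Definition is_total_order (A : Type) (T : rel A) : Prop :=
  [/\ reflexive T, antisymmetric T, transitive T & total T].

Definition sample_le (m n : nat) (x y : Omega m n) : Prop :=
  forall j : 'I_n, (tnth (val x) j <= tnth (val y) j)%N.

Definition monotone_order (m n : nat) (T : rel (Omega m n)) : Prop :=
  forall x y, sample_le x y -> T x y.

Definition T_low (m n : nat) : rel (Omega m n) := fun x y =>
  (x == y) ||
  [exists j : 'I_n,
     [forall i : 'I_n, (i < j)%N ==> (tnth (val x) i == tnth (val y) i)]
     && (tnth (val x) j < tnth (val y) j)%N].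

Definition T_high (m n : nat) : rel (Omega m n) := fun x y =>
  (x == y) ||
  [exists j : 'I_n,
     [forall i : 'I_n, (j < i)%N ==> (tnth (val x) i == tnth (val y) i)]
     && (tnth (val x) j < tnth (val y) j)%N].

Lemma hom_sorted (m n : nat) (k : 'I_m) :
  sorted (@ord_le m) [tuple of nseq n k].
Proof.
rewrite /=; elim: n => [|n IH] //=; case: n IH => [|n] //= IH.
by rewrite /ord_le leqnn.
Qed.

Definition hom_sample (m n : nat) (k : 'I_m) : Omega m n :=
  exist _ [tuple of nseq n k] (hom_sorted n k).

(* Main.v *)
Require Import Defs.
From HB Require Import structures.
From mathcomp Require Import all_boot all_order all_algebra.
From mathcomp Require Import classical_sets boolp reals topology normedtype.
Import numFieldNormedType.Exports.
Import Order.TTheory GRing.Theory Num.Theory.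
Local Open Scope ring_scope.

Lemma tnth_sorted (m n : nat) (y : Omega m n) (i j : 'I_n) :
  (i <= j)%N -> (tnth (val y) i <= tnth (val y) j)%N.
Proof.
move=> ij; case: y => t st /=.
have x0 := tnth t i.
rewrite !(tnth_nth x0).
have tr : transitive (@ord_le m) by move=> a b c; apply: leq_trans.
have rf : reflexive (@ord_le m) by move=> a; apply: leqnn.
by apply: (sorted_leq_nth tr rf x0 st); rewrite ?inE ?size_tuple.
Qed.

Lemma probF_mono (R : realType) (m n : nat) (F : 'rV[R]_m)
  (O1 O2 : pred (Omega m n)) :
  (forall i, 0 <= F ord0 i) -> (forall y, O1 y -> O2 y) ->
  probF F O1 <= probF F O2.
Proof.
move=> F0 sub; rewrite /probF big_mkcond [X in _ <= X]big_mkcond /=.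
apply: ler_sum => w _.
case: ifP => P1; case: ifP => P2 //.
- move: P1 => /existsP [y /andP [y1 yw]].
  by move: P2 => /negbT /existsP; case; exists y; rewrite yw andbT; apply: sub.
- by apply: prodr_ge0 => i _.
Qed.

Lemma Fset_mono (R : realType) (m n : nat) (O1 O2 : pred (Omega m n)) (alpha : R) :
  (forall y, O1 y -> O2 y) ->
  (Fset O1 alpha `<=` Fset O2 alpha)%classic.
Proof.
move=> sub; apply: closureS => F [sF pF]; split => //.
apply: (lt_le_trans pF); apply: probF_mono => //; by case: sF.
Qed.

Lemma Spt_ge (R : realType) (m : nat) (Smin Smax : R) (i : 'I_m) :
  Smin <= Smax -> Smin <= Spt Smin Smax i.
Proof.
move=> le; rewrite /Spt lerDl; apply: mulr_ge0 => //.
by apply: divr_ge0; rewrite ?subr_ge0.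
Qed.

Lemma mean_ge (R : realType) (m : nat) (Smin Smax : R) (F : 'rV[R]_m) :
  Smin <= Smax -> simplex F -> Smin <= mean Smin Smax F.
Proof.
move=> le [F0 F1]; rewrite /mean.
have e : Smin = \sum_(i < m) F ord0 i * Smin by rewrite -mulr_suml F1 mul1r.
rewrite [X in X <= _]e.
by apply: ler_sum => i _; apply: ler_wpM2l; [exact: F0 | exact: Spt_ge].
Qed.

Lemma mean_cont (R : realType) (m : nat) (Smin Smax : R) :
  continuous (@mean R m Smin Smax).
Proof.
rewrite /mean.
apply: (@continuous_big _ _ +%R 0 (fun _ => true)); first exact: add_continuous.
move=> i _ F.
have h1 : {for F, continuous (fun M : 'rV[R]_m => M ord0 i)} by apply: coord_continuous.
have h2 : {for F, continuous (fun _ : 'rV[R]_m => Spt Smin Smax i)} by apply: cst_continuous.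
exact: (continuousM h1 h2).
Qed.

Lemma Fset_ge (R : realType) (m n : nat) (Smin Smax alpha : R) (O : pred (Omega m n)) :
  Smin <= Smax ->
  (Fset O alpha `<=` [set F | Smin <= mean Smin Smax F])%classic.
Proof.
move=> le.
have cl : closed [set F : 'rV[R]_m | Smin <= mean Smin Smax F].
  have := (proj1 (continuous_closedP _) (@mean_cont R m Smin Smax) _ (@closed_ge R Smin)).
  exact.
rewrite /Fset; move/closure_id: cl => ->.
apply: closureS => F [sF _] /=; exact: mean_ge.
Qed.

Lemma inf_mono (R : realType) (m n : nat) (Smin Smax alpha : R) (O1 O2 : pred (Omega m n)) :
  Smin <= Smax -> (forall y, O1 y -> O2 y) ->
  (Fset O1 alpha !=set0)%classic ->
  inf [set mean Smin Smax F | F in Fset O2 alpha]%classic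
  <= inf [set mean Smin Smax F | F in Fset O1 alpha]%classic.
Proof.
move=> le sub [F0 hF0].
apply: inf_le.
- move=> _ [_ [F hF <-] <-]; apply/downP.
  exists (- mean Smin Smax F) => //; exists (mean Smin Smax F) => //.
  by exists F => //; exact: (@Fset_mono R m n O1 O2 alpha sub F hF).
- by exists (mean Smin Smax F0); exists F0.
- split; first by exists (mean Smin Smax F0); exists F0 => //; exact: (@Fset_mono R m n O1 O2 alpha sub F0 hF0).
  exists Smin => _ [F hF <-]; exact: (@Fset_ge R m n Smin Smax alpha O2 le F hF).
Qed.

Lemma delta_in (R : realType) (m n : nat) (alpha : R) (O : pred (Omega m n)) (j : 'I_m) :
  alpha < 1 -> O (hom_sample n j) -> (Fset O alpha !=set0)%classic.
Proof.
move=> a1 Oj.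
pose F : 'rV[R]_m := \row_i (i == j)%:R.
exists F; apply: subset_closure; split.
  split; first by move=> i; rewrite mxE ler0n.
  rewrite (bigD1 j) //= big1 ?addr0 ?mxE ?eqxx //.
  by move=> i /negbTE ij; rewrite mxE ij.
apply: (lt_le_trans a1).
pose w0 : n.-tuple 'I_m := [tuple of nseq n j].
rewrite /probF (bigD1 w0) /=; last first.
  apply/existsP; exists (hom_sample n j); apply/andP; split; first exact: Oj.
  have tr : transitive (@ord_le m) by move=> a b c; apply: leq_trans.
  by rewrite /= (sorted_sort tr (hom_sorted n j)).
rewrite big1 ?mxE; last by move=> i _; rewrite /w0 tnth_nseq mxE eqxx.
rewrite lerDl; apply: sumr_ge0 => w _; apply: prodr_ge0 => i _; by rewrite mxE ler0n.
Qed.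

Theorem theorem4 (R : realType) (m n : nat) (Smin Smax alpha : R)
  (Hm : (2 <= m)%N) (Hn : (1 <= n)%N) (HS : Smin < Smax)
  (Ha0 : 0 <= alpha) (Ha1 : alpha < 1)
  (T : rel (Omega m n)) (HT : is_total_order T) (HTm : monotone_order T)
  (x : Omega m n) (k : 'I_m) (Hk : (k.+1 < m)%N)
  (Hlo : T (@hom_sample m n k) x) (Hhi : T x (@hom_sample m n (Ordinal Hk))) :
  Bstar Smin Smax alpha (@T_high m n) (@hom_sample m n k)
    <= Bstar Smin Smax alpha T x /\
  Bstar Smin Smax alpha T x
    <= Bstar Smin Smax alpha (@T_low m n) (@hom_sample m n (Ordinal Hk)).
Proof.
case: HT => Trefl Tanti Ttrans _.
have le := ltW HS.
split; rewrite /Bstar.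
- apply: inf_mono => //; last by apply: (@delta_in R m n alpha _ (Ordinal Hk)).
  move=> y Txy; have {}Txy : T x y := Txy.
  suff : T_high (hom_sample n k) y by []; rewrite /T_high; case: (boolP (hom_sample n k == y)) => //= /eqP ne.
  have ln : (n.-1 < n)%N by rewrite prednK.
  pose l : 'I_n := Ordinal ln.
  case: (ltnP k (tnth (val y) l)) => hl.
    apply/existsP; exists l; rewrite tnth_nseq hl andbT.
    apply/forallP => i; apply/implyP => /= li.
    move: li; rewrite -ltnS prednK // ltnS => li.
    by move: (ltn_ord i); rewrite ltnNge li.
  exfalso; apply: ne; apply: Tanti; apply/andP; split.
    exact: (Ttrans x).
  apply: HTm => i /=; rewrite tnth_nseq.
  apply: leq_trans hl; apply: tnth_sorted => /=.
  by rewrite -ltnS prednK.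
- apply: inf_mono => //; last first.
    apply: (@delta_in R m n alpha _ (Ordinal Hk)) => //=.
    by apply/orP; left.
  move=> y Hy; have {Hy} : T_low (hom_sample n (Ordinal Hk)) y := Hy.
  move=> /orP [/eqP <- // | /existsP [j /andP [/forallP hi hj]]].
  apply: (Ttrans (hom_sample n (Ordinal Hk))) => //.
  have j0 : (0 < n)%N by apply: leq_ltn_trans (ltn_ord j).
  pose i0 : 'I_n := Ordinal j0.
  have h0 : (k.+1 <= tnth (val y) i0)%N.
    move: hj; rewrite tnth_nseq /=.
    have [jz|jpos] := posnP j.
      have -> : i0 = j by apply: val_inj; rewrite /= jz.
      exact: ltnW.
    by move=> _; move: (hi i0); rewrite /= jpos tnth_nseq => /eqP <-.
  apply: HTm => i /=; rewrite tnth_nseq.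
  by apply: leq_trans h0 _; apply: tnth_sorted.
Qed.
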